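(* Let $k\geq2$ and let $L=(l_1,\dots,l_k)$ be positive integers with sum $n$ which are generic and reduced, and let $(f_0,\dots,f_{k-1})$ be the $f$-vector of $Tonn^{n,k}(L)$ ($f_{m-1}$ = number of $(m-1)$-dimensional simplices). Then for $1\leq m\leq k$, $$f_{m-1}=n\,\frac{P(k,m)}{m}=n\,\frac{m!}{m}\,S(k,m),$$ where $P(k,m)$ is the number of ordered partitions $I_1\sqcup\dots\sqcup I_m=[k]$ into $m$ nonempty blocks and $S(k,m)$ is the Stirling number of the second kind.
   Context: $L=(l_1,\dots,l_k)$ is generic if for all subsets $I,J\subseteq[k]$, $\sum_{i\in I}l_i=\sum_{j\in J}l_j$ implies $I=J$. $L$ is reduced if $\gcd(l_1,\dots,l_k)=1$. The generalized tonnetz $Tonn^{n,k}(L)$ is the simplicial complex on vertex set $\mathbb{Z}_n$ whose maximal simplices are the sets $\Delta(x;\sigma)=\{x,\,x+l_{\sigma(1)},\dots,x+l_{\sigma(1)}+\dots+l_{\sigma(k-1)}\}$ (sums in $\mathbb{Z}_n$), for $x\in\mathbb{Z}_n$ and $\sigma\in S_k$; its simplices are all subsets of these sets. *)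

(* Defs.v *)
From mathcomp Require Import all_boot all_fingroup.
Set Implicit Arguments. Unset Strict Implicit. Unset Printing Implicit Defensive.

(* L = (l_0,...,l_{k-1}) indexed by 'I_k. *)
Definition generic (k : nat) (l : 'I_k -> nat) : Prop :=
  forall I J : {set 'I_k},
    \sum_(i in I) l i = \sum_(j in J) l j -> I = J.

Definition reduced (k : nat) (l : 'I_k -> nat) : Prop :=
  \big[gcdn/0]_(i < k) l i = 1.

(* Vertex set Z_n represented by 'I_n; sums taken mod n.
   Delta(x; s) = { x + l_{s 0} + ... + l_{s (i-1)} mod n : 0 <= i < k }. *)
Definition tonn_delta (n k : nat) (l : 'I_k -> nat) (x : 'I_n) (s : {perm 'I_k})
  : {set 'I_n} :=
  [set y : 'I_n | [exists i : 'I_k,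
     val y == (x + \sum_(j < k | j < i) l (s j)) %% n]].

Definition tonn_simplex (n k : nat) (l : 'I_k -> nat) (A : {set 'I_n}) : bool :=
  [exists x : 'I_n, exists s : {perm 'I_k}, A \subset tonn_delta l x s].

(* f-vector entry f_{m-1}: number of simplices with m vertices. *)
Definition tonn_f (n k : nat) (l : 'I_k -> nat) (m : nat) : nat :=
  #|[set A : {set 'I_n} | (#|A| == m) && tonn_simplex l A]|.

(* Number of ordered partitions of [k] into m nonempty blocks
   (I_1,...,I_m), encoded as surjections 'I_k -> 'I_m (block index). *)
Definition ord_partitions (k m : nat) : nat :=
  #|[set f : {ffun 'I_k -> 'I_m} | [forall j : 'I_m, exists i : 'I_k, f i == j]]|.

Fixpoint stirling2 (k m : nat) : nat :=
  match k, m with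
  | 0, 0 => 1
  | 0, _.+1 => 0
  | _.+1, 0 => 0
  | k'.+1, m'.+1 => m'.+1 * stirling2 k' m'.+1 + stirling2 k' m'
  end.

(* Main.v *)
Require Import Defs.
From mathcomp Require Import all_boot all_fingroup.
From mathcomp Require Import zify.
Set Implicit Arguments. Unset Strict Implicit. Unset Printing Implicit Defensive.

Definition hit k m (g : {ffun 'I_k -> 'I_m}) (j : 'I_m) := [exists i, g i == j].

Definition ext k m (p : 'I_m * {ffun 'I_k -> 'I_m}) : {ffun 'I_k.+1 -> 'I_m} :=
  [ffun i => if unlift ord0 i is Some j then p.2 j else p.1].

Lemma ext_inj k m : injective (@ext k m).
Proof.
move=> [v g] [v' g'] /ffunP E.
have := E ord0; rewrite !ffunE unlift_none /= => ->.
congr pair; apply/ffunP => j; have := E (lift ord0 j).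
by rewrite !ffunE liftK.
Qed.

Lemma card_ext k m (P : {ffun 'I_k.+1 -> 'I_m} -> bool) :
  #|[set f | P f]| = #|[set p | P (@ext k m p)]|.
Proof.
rewrite -(card_imset _ (@ext_inj k m)); apply: eq_card => f.
rewrite inE; apply/idP/imsetP.
- move=> Pf; exists (f ord0, [ffun j => f (lift ord0 j)]); last first.
    apply/ffunP => i; rewrite ffunE; case: unliftP => [j ->|->] //=.
    by rewrite ffunE.
  rewrite inE; suff -> : ext (f ord0, [ffun j => f (lift ord0 j)]) = f by [].
  apply/ffunP => i; rewrite ffunE; case: unliftP => [j ->|->] //=.
  by rewrite ffunE.
- by case=> p; rewrite inE => Pp ->.
Qed.

Lemma card_pair (I J : finType) (Q : I -> J -> bool) :
  #|[set p : I * J | Q p.1 p.2]| = \sum_(i : I) #|[set j | Q i j]|.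
Proof.
rewrite -(sum1dep_card (fun p : I * J => Q p.1 p.2)).
transitivity (\sum_(i : I) \sum_(j | Q i j) 1).
  by rewrite pair_big_dep /=.
by apply: eq_bigr => i _; rewrite sum1dep_card.
Qed.

Lemma card_or (T : finType) (a b : pred T) :
  (forall x, ~~ (a x && b x)) ->
  #|[set x | a x || b x]| = #|[set x | a x]| + #|[set x | b x]|.
Proof.
move=> D; rewrite -!sum1dep_card (bigID a) /=; congr (_ + _).
  by apply: eq_bigl => x /=; case: (a x); case: (b x).
apply: eq_bigl => x /=; have := D x; by case: (a x); case: (b x).
Qed.

Lemma card_avoid k m (v : 'I_m.+1) :
  #|[set g : {ffun 'I_k -> 'I_m.+1} | ~~ hit g v && [forall j, (j != v) ==> hit g j]]|
  = #|[set g : {ffun 'I_k -> 'I_m} | [forall j, exists i, g i == j]]|.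
Proof.
pose L (g : {ffun 'I_k -> 'I_m}) : {ffun 'I_k -> 'I_m.+1} := [ffun i => lift v (g i)].
have Linj : injective L.
  move=> g g' /ffunP E; apply/ffunP => i; have := E i; rewrite !ffunE.
  exact: lift_inj.
rewrite -(card_imset _ Linj); apply: eq_card => g.
 rewrite inE; apply/idP/imsetP.
- case/andP => nh /forallP H.
  have av : forall i, g i != v.
    move=> i; apply/negP => /eqP E; case/negP: nh; apply/existsP; exists i; exact/eqP.
  have gi : forall i, {j | g i = lift v j}.
    move=> i; case: (unliftP v (g i)) => [j ->|E]; first by exists j.
    by move: (av i); rewrite E eqxx.
  exists [ffun i => sval (gi i)].
    rewrite inE; apply/forallP => j; have := H (lift v j).
    rewrite (eq_sym (lift v j)) neq_lift /= => /existsP [i /eqP Ei]; apply/existsP; exists i.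
    rewrite ffunE; apply/eqP; apply: (@lift_inj _ v); rewrite -Ei.
    by case: (gi i).
  apply/ffunP => i; rewrite !ffunE; by case: (gi i).
- case=> g' ; rewrite inE => /forallP H ->; apply/andP; split.
    apply/negP => /existsP [i]; rewrite ffunE => /eqP E.
    by move: (neq_lift v (g' i)); rewrite E eqxx.
  apply/forallP => j; apply/implyP => nj.
  case: (unliftP v j) => [j' Ej|Ej]; last by rewrite Ej eqxx in nj.
  have /existsP [i /eqP Ei] := H j'; apply/existsP; exists i.
  by rewrite ffunE Ei Ej.
Qed.

Lemma surj_count k m : ord_partitions k m = m`! * stirling2 k m.
Proof.
rewrite /ord_partitions.
elim: k m => [|k IH] [|m].
- rewrite muln1.
  have -> : [set f : {ffun 'I_0 -> 'I_0} | [forall j, exists i, f i == j]] = setT.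
    by apply/setP => f; rewrite !inE; apply/forallP => [[]].
  by rewrite cardsT card_ffun !card_ord.
- rewrite /= muln0; apply/eqP; rewrite cards_eq0; apply/eqP/setP => f; rewrite !inE.
  apply/negP => /forallP /(_ ord0) /existsP [[]] //.
- rewrite /= muln0; apply/eqP; rewrite -leqn0.
  by rewrite (leq_trans (max_card _)) // card_ffun !card_ord exp0n.
- rewrite card_ext.
  rewrite (card_pair (fun v (g : {ffun 'I_k -> 'I_m.+1}) =>
       [forall j, exists i, (ext (v, g)) i == j])).
  transitivity (\sum_(v : 'I_m.+1) (m.+1`! * stirling2 k m.+1 + m`! * stirling2 k m)).
    apply: eq_bigr => v _.
    rewrite -!IH -(card_avoid k v) -card_or; last first.
      move=> g; apply/negP => /and3P [/forallP H nh _]; case/negP: nh; exact: H v.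
    apply: eq_card => g; rewrite !inE.
    have E : forall j, [exists i, ext (v, g) i == j] = (v == j) || hit g j.
      move=> j; apply/existsP/orP.
        case=> i; rewrite ffunE; case: unliftP => [i' _|_] /=.
          by move=> Hj; right; apply/existsP; exists i'.
        by left.
      case=> [/eqP <-|/existsP [i Hi]].
        by exists ord0; rewrite ffunE unlift_none.
      by exists (lift ord0 i); rewrite ffunE liftK.
    under eq_forallb do rewrite E.
    case: (boolP (hit g v)) => hv.
      rewrite andFb orbF.
      apply/forallP/forallP => H j.
        by have := H j; case: eqP => [<- _|_ //]; exact: hv.
      by rewrite /hit H orbT.
    have -> : [forall j, exists i, g i == j] = false.
      apply/negbTE/negP => /forallP H; case/negP: hv; exact: H v.
    rewrite andTb /=.
    apply/forallP/forallP => H j.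
      by apply/implyP => nj; have := H j; rewrite eq_sym (negbTE nj).
    case: (v =P j) => //= nj; apply: (implyP (H j)); apply/eqP => Ej; apply: nj; by rewrite Ej.
  rewrite sum_nat_const card_ord /= factS; nia.
Qed.

Section Main.
Variables (k : nat) (l : 'I_k -> nat) (n : nat) (m' : nat).
Hypotheses (lpos : forall i, 0 < l i) (nE : n = \sum_(i < k) l i) (gen : generic l).
Hypothesis n_gt0 : 0 < n.

Local Notation m := m'.+1.

Definition toI (v : nat) : 'I_n := Ordinal (ltn_pmod v n_gt0).
Definition sig (f : {ffun 'I_k -> 'I_m}) (J : nat) := \sum_(i | f i < J) l i.
Definition Adef (y : 'I_n) (f : {ffun 'I_k -> 'I_m}) := [set toI (y + sig f J) | J : 'I_m].
Definition surjb (f : {ffun 'I_k -> 'I_m}) := [forall j, exists i, f i == j].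

Lemma sum_split (P : pred 'I_k) : n = \sum_(i | P i) l i + \sum_(i | ~~ P i) l i.
Proof. by rewrite nE (bigID P). Qed.

Lemma sig_lt f (J : 'I_m) : surjb f -> sig f J < n.
Proof.
move=> /forallP /(_ ord_max) /existsP [i /eqP fi].
rewrite (sum_split (fun i => f i < J)) /sig -addn1 leq_add2l.
rewrite (bigD1 i) /=; last by rewrite fi -leqNgt -ltnS.
by rewrite (leq_trans (lpos i)) // leq_addr.
Qed.

Lemma sig_gen f g (J J' : nat) : sig f J = sig g J' -> [set i | f i < J] = [set i | g i < J'].
Proof.
move=> E; apply: gen.
rewrite (eq_bigl (fun i => f i < J)); last by move=> i; rewrite inE.
rewrite [RHS](eq_bigl (fun i => g i < J')); last by move=> i; rewrite inE.
exact: E.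
Qed.

Lemma sig_inj f : surjb f -> injective (fun J : 'I_m => [set i | f i < J]).
Proof.
move=> /forallP sf J1 J2 /= E.
wlog lt12 : J1 J2 E / J1 < J2.
  move=> W; case: (ltngtP J1 J2) => [h|h|h]; first exact: W.
    by apply/esym/W.
  exact: val_inj.
have /existsP [i /eqP fi] := sf J1.
have : i \in [set i | f i < J2] by rewrite inE fi.
by rewrite -E inE fi ltnn.
Qed.

Lemma toI_inj (y : nat) a b : a < n -> b < n -> toI (y + a) = toI (y + b) -> a = b.
Proof.
move=> an bn /(congr1 val) /= /eqP; rewrite eqn_modDl => /eqP.
by rewrite !modn_small.
Qed.

Lemma Adef_card y f : surjb f -> #|Adef y f| = m.
Proof.
move=> sf; rewrite card_imset ?card_ord // => J1 J2 /toI_inj E.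
apply: (sig_inj sf); apply: sig_gen; apply: E; exact: sig_lt.
Qed.

Lemma Adef_in y f : y \in Adef y f.
Proof.
apply/imsetP; exists ord0 => //; apply: val_inj => /=.
rewrite /sig big_pred0 // addn0 modn_small //.
Qed.


Lemma card_lt_k (A : {set 'I_k}) i : i \notin A -> #|A| < k.
Proof.
move=> ni; have := @proper_card _ A [set: 'I_k]; rewrite cardsT card_ord; apply.
rewrite properT; by apply/eqP => E; move: ni; rewrite E inE.
Qed.

Lemma Adef_simplex y f : surjb f -> tonn_simplex l (Adef y f).
Proof.
move=> sf.
pose key (i : 'I_k) := f i * k + i.
have keyinj : forall i j, key i = key j -> i = j.
  move=> i j E; apply: val_inj => /=.
  have := congr1 (modn^~ k) E; rewrite /key !modnMDl !modn_small //.
have keylt : forall i j, f i < f j -> key i < key j.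
  move=> i j h; rewrite /key; have := ltn_ord i; nia.
pose rr (i : 'I_k) := #|[set i' | key i' < key i]|.
have rlt : forall i, rr i < k.
  by move=> i; apply: (@card_lt_k _ i); rewrite inE ltnn.
pose r i := Ordinal (rlt i).
have rmono : forall i j, key i < key j -> r i < r j.
  move=> i j h; apply: proper_card; apply/properP; split.
    by apply/subsetP => i'; rewrite !inE => /ltn_trans; apply.
  by exists i; rewrite !inE ?ltnn.
have rinj : injective r.
  move=> i j E; case: (ltngtP (key i) (key j)) => h.
  - by have := rmono _ _ h; rewrite E ltnn.
  - by have := rmono _ _ h; rewrite E ltnn.
  - exact: keyinj.
pose s := ((perm rinj)^-1)%g.
apply/existsP; exists y; apply/existsP; exists s.
apply/subsetP => z /imsetP [J _ ->].
have /existsP [i0 /eqP fi0] := (forallP sf) ord_max.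
have ck : #|[set i | f i < J]| < k.
  by apply: (@card_lt_k _ i0); rewrite inE fi0 -leqNgt -ltnS.
rewrite inE; apply/existsP; exists (Ordinal ck) => /=.
apply/eqP; congr ((y + _) %% n).
rewrite (reindex_inj (@perm_inj _ (perm rinj))) /=.
under eq_bigr do rewrite /s permK.
apply: eq_bigl => i; rewrite permE /=; apply/esym.
case: (ltnP (f i) J) => h.
- apply/idP; apply: proper_card; apply/properP; split.
    apply/subsetP => i'; rewrite !inE => h'.
    case: (ltnP (f i) (f i')) => h2.
      by have := keylt _ _ h2; rewrite ltnNge ltnW.
    exact: leq_ltn_trans h2 h.
  by exists i; rewrite !inE ?ltnn.
- rewrite ltnNge; apply/negbF; apply: subset_leq_card; apply/subsetP => i'.
  rewrite !inE => h'; apply: keylt; exact: leq_trans h' h.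
Qed.


Lemma card_le_ord (c : nat) (M : nat) : c < M -> #|[set J : 'I_M | J <= c]| = c.+1.
Proof.
move=> cM.
have -> : [set J : 'I_M | J <= c] = [set widen_ord cM j | j : 'I_c.+1].
  apply/setP => J; rewrite inE; apply/idP/imsetP.
    by move=> h; exists (Ordinal (h : J < c.+1)) => //; apply: val_inj.
  by case=> j _ ->; rewrite /= -ltnS.
by rewrite card_imset ?card_ord //; move=> a b /(congr1 val) /= E; exact: val_inj.
Qed.

Definition Fam (f : {ffun 'I_k -> 'I_m}) := [set [set i | f i < J] | J : 'I_m].

Lemma Fam_count f i : surjb f -> #|[set X in Fam f | i \notin X]| = (f i).+1.
Proof.
move=> sf; rewrite -(card_le_ord (ltn_ord (f i))).
have -> : [set X in Fam f | i \notin X] =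
   [set [set i1 | f i1 < J] | J : 'I_m in [set J : 'I_m | J <= f i]].
  apply/setP => X; rewrite inE; apply/andP/imsetP.
    case=> /imsetP [J _ ->]; rewrite inE -leqNgt => h.
    by exists J; rewrite // inE.
  case=> J; rewrite inE => h ->; split; first by apply/imsetP; exists J.
  by rewrite inE -leqNgt.
rewrite card_in_imset //; move=> J1 J2 _ _; exact: (sig_inj sf).
Qed.

Lemma Fam_sub y f g : surjb f -> surjb g -> Adef y f = Adef y g -> Fam f \subset Fam g.
Proof.
move=> sf sg E; apply/subsetP => X /imsetP [J _ ->].
have : toI (y + sig f J) \in Adef y g by rewrite -E; apply/imsetP; exists J.
case/imsetP => J' _ /toI_inj E'.
apply/imsetP; exists J' => //; apply: sig_gen; apply: E'; exact: sig_lt.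
Qed.

Lemma Adef_inj y f g : surjb f -> surjb g -> Adef y f = Adef y g -> f = g.
Proof.
move=> sf sg E.
have EF : Fam f = Fam g by apply/eqP; rewrite eqEsubset (Fam_sub sf sg E) (Fam_sub sg sf (esym E)).
apply/ffunP => i; apply: val_inj; apply: succn_inj.
by rewrite -(Fam_count i sf) -(Fam_count i sg) EF.
Qed.


Section Pos.
Variables (x : 'I_n) (s : {perm 'I_k}).

Definition P (i : nat) := \sum_(j < k | j < i) l (s j).

Lemma P_split (i : nat) : n = P i + \sum_(j < k | ~~ (j < i)) l (s j).
Proof. by rewrite nE (reindex_inj (@perm_inj _ s)) /= (bigID (fun j : 'I_k => j < i)). Qed.

Lemma P_mono (i i' : nat) : i < i' -> i' <= k -> P i < P i'.
Proof.
move=> ii' i'k; have ik : i < k by exact: leq_trans ii' i'k.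
rewrite {2}/P (bigID (fun j : 'I_k => j < i)) /=.
rewrite (eq_bigl (fun j : 'I_k => j < i)); last first.
  by move=> j; apply/andP/idP => [[]//|h]; split=> //; exact: ltn_trans h ii'.
rewrite -[P i]addn0 ltn_add2l (bigD1 (Ordinal ik)) /=; last by rewrite ii' ltnn.
by rewrite addn_gt0 lpos.
Qed.

Lemma P_le (i : nat) : P i <= n.
Proof. by rewrite (P_split i) leq_addr. Qed.

Lemma P_lt (i : 'I_k) : P i < n.
Proof.
have -> : n = P k by rewrite {1}(P_split k) big_pred0 ?addn0 // => j; rewrite ltn_ord.
exact: P_mono.
Qed.

Lemma P_ltP (i j : 'I_k) : i < j -> P i < P j.
Proof. by move=> h; apply: P_mono => //; exact: ltnW. Qed.

Lemma P_leP (i j : 'I_k) : i <= j -> P i <= P j.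
Proof. by rewrite leq_eqVlt => /orP [/eqP ->//|/P_ltP/ltnW]. Qed.

Lemma P_inj (i j : 'I_k) : P i = P j -> i = j.
Proof.
move=> E; case: (ltngtP i j) => h.
- by have := P_ltP h; rewrite E ltnn.
- by have := P_ltP h; rewrite E ltnn.
- exact: val_inj.
Qed.

Variable i0 : 'I_k.

Definition D (j : 'I_k) := if i0 <= j then P j - P i0 else n - P i0 + P j.

Lemma D_lt j : D j < n.
Proof.
have H1 := P_lt j; have H2 := P_lt i0.
rewrite /D; case: (leqP i0 j) => h; last by have := P_ltP h; lia.
have := P_leP h; lia.
Qed.

Lemma D_pos j : ((x + P i0) %% n + D j) %% n = (x + P j) %% n.
Proof.
have H1 := P_lt j; have H2 := P_lt i0.
rewrite modnDml /D; case: (leqP i0 j) => h.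
  by have := P_leP h => *; congr (_ %% n); lia.
rewrite -(modnDr (x + P j)); congr (_ %% n); lia.
Qed.

Lemma bool_eq (b c : bool) : (b -> c) -> (c -> b) -> b = c.
Proof. by case: b; case: c => // H1 H2; [have := H1 isT | have := H2 isT]. Qed.

Lemma D_sum i : \sum_(j | D j < D i) l (s j) = D i.
Proof.
have Pi := P_lt i; have Pi0 := P_lt i0.
case: (leqP i0 i) => hi.
- have -> : D i = P i - P i0 by rewrite /D hi.
  rewrite (eq_bigl (fun j : 'I_k => (j < i) && ~~ (j < i0))); last first.
    move=> j; rewrite /D -leqNgt; have Pj := P_lt j; case: (leqP i0 j) => hj.
      rewrite andbT; case: (ltnP j i) => hji.
        have := P_ltP hji; have := P_leP hj; lia.
      have := P_leP hji; lia.
    rewrite andbF; apply/negbTE; rewrite -leqNgt; lia.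
  have := P_split i0; rewrite /P (bigID (fun j : 'I_k => j < i0) (fun j : 'I_k => j < i)) /=.
  have -> : \sum_(j < k | (j < i) && (j < i0)) l (s j) = \sum_(j < k | j < i0) l (s j).
    by apply: eq_bigl => j; apply/andP/idP => [[]//|h]; split=> //; exact: leq_trans h hi.
  by move=> _; rewrite addKn.
- have -> : D i = n - P i0 + P i by rewrite /D leqNgt hi.
  rewrite (eq_bigl (fun j : 'I_k => (j < i) || ~~ (j < i0))); last first.
    move=> j; rewrite /D -leqNgt; have Pj := P_lt j; case: (leqP i0 j) => hj.
      rewrite orbT; apply/idP; lia.
    rewrite orbF; case: (ltnP j i) => hji.
      have := P_ltP hji; lia.
    have := P_leP hji; lia.
  rewrite (bigID (fun j : 'I_k => j < i0)) /=.
  rewrite (eq_bigl (fun j : 'I_k => j < i)); last first.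
    move=> j; apply/andP/idP => [[/orP [//|/negP h1] h2]|h]; first by case: h1.
    by split; [rewrite h | exact: ltn_trans h hi].
  have -> : \sum_(j < k | ((j < i) || ~~ (j < i0)) && ~~ (j < i0)) l (s j) =
            \sum_(j < k | ~~ (j < i0)) l (s j).
    by apply: eq_bigl => j; apply/andP/idP => [[]//|h]; split=> //; rewrite h orbT.
  have := P_split i0; rewrite /P => ->; rewrite addKn addnC; congr (_ + _); exact: eq_bigl.
Qed.

End Pos.


Lemma Adef_onto (A : {set 'I_n}) (a : 'I_n) :
  #|A| = m -> tonn_simplex l A -> a \in A -> exists2 f, surjb f & Adef a f = A.
Proof.
move=> cA /existsP [x /existsP [s sub]] aA.
pose pos (i : 'I_k) := toI (x + P s i).
have inD : forall z, z \in A -> exists i, z = pos i.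
  move=> z /(subsetP sub); rewrite inE => /existsP [i /eqP E]; exists i.
  by apply: val_inj; rewrite /= E.
have [i0 ai0] := inD a aA.
have posD : forall j, pos j = toI (a + D s i0 j).
  by move=> j; apply: val_inj; rewrite /= ai0 /= (D_pos x).
have posinj : forall i j, pos i = pos j -> i = j.
  move=> i j /toI_inj E; apply: (P_inj (s := s)); apply: E; exact: P_lt.
have Dinj : forall i j, D s i0 i = D s i0 j -> i = j.
  by move=> i j E; apply: posinj; rewrite !posD E.
pose K := [set i | pos i \in A].
have cK : #|K| = m.
  rewrite -cA; have -> : A = pos @: K.
    apply/setP => z; apply/idP/imsetP.
      by move=> zA; have [i Ei] := inD z zA; exists i; rewrite // inE -Ei.
    by case=> i; rewrite inE => h ->.
  by rewrite card_imset //; move=> i j; exact: posinj.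
have i0K : i0 \in K by rewrite inE -ai0.
have D0 : D s i0 i0 = 0 by rewrite /D leqnn subnn.
pose rank i := #|[set j in K | D s i0 j <= D s i0 i]|.
have rank_pos : forall i, 0 < rank i.
  by move=> i; rewrite card_gt0; apply/set0Pn; exists i0; rewrite inE i0K D0.
have rank_le : forall i, rank i <= m.
  move=> i; rewrite -cK; apply: subset_leq_card; apply/subsetP => j.
  by rewrite inE => /andP [].
have rank_lt : forall i j, i \in K -> D s i0 j < D s i0 i -> rank j < rank i.
  move=> i j iK h; apply: proper_card; apply/properP; split.
    apply/subsetP => j'; rewrite !inE => /andP [-> h']; exact: leq_trans h' (ltnW h).
  exists i; first by rewrite in_set iK leqnn.
  by rewrite in_set iK /= -ltnNge.
have rank_le2 : forall i j, D s i0 i <= D s i0 j -> rank i <= rank j.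
  move=> i j h; apply: subset_leq_card; apply/subsetP => j'; rewrite !inE.
  by case/andP => -> h'; exact: leq_trans h' h.
have fv : forall i, (rank i).-1 < m.
  by move=> i; have := rank_pos i; have := rank_le i; lia.
pose f := [ffun i' => Ordinal (fv ((s^-1)%g i'))] : {ffun 'I_k -> 'I_m}.
have fs : forall j, val (f (s j)) = (rank j).-1 by move=> j; rewrite ffunE /= permK.
have sigD : forall i, i \in K -> sig f (f (s i)) = D s i0 i.
  move=> i iK; rewrite /sig (reindex_inj (@perm_inj _ s)) /=.
  transitivity (\sum_(j | D s i0 j < D s i0 i) l (s j)); last exact: D_sum.
  apply: eq_bigl => j; rewrite !fs; apply: bool_eq => h.
    case: (ltnP (D s i0 j) (D s i0 i)) => // h2.
    have := rank_le2 _ _ h2; have := rank_pos i; have := rank_pos j; lia.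
  have := rank_lt i j iK h; have := rank_pos j; lia.
have sub1 : A \subset Adef a f.
  apply/subsetP => z zA; have [i Ei] := inD z zA.
  have iK : i \in K by rewrite inE -Ei.
  rewrite Ei posD -(sigD i iK); apply/imsetP; exists (f (s i)) => //.
exists f; last first.
  apply/esym/eqP; rewrite eqEcard sub1 /= cA.
  by rewrite (leq_trans (leq_imset_card _ _)) // card_ord.
have E : [set f (s i) | i in K] = setT.
  apply/eqP; rewrite eqEcard subsetT cardsT card_ord card_in_imset ?cK ?ltnSn //.
  move=> i j iK jK /(congr1 val); rewrite !fs => Er.
  have Er' : rank i = rank j by have := rank_pos i; have := rank_pos j; lia.
  case: (ltngtP (D s i0 i) (D s i0 j)) => h.
  - by have := rank_lt _ _ jK h; rewrite Er' ltnn.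
  - by have := rank_lt _ _ iK h; rewrite Er' ltnn.
  - exact: Dinj.
apply/forallP => J; have : J \in [set: 'I_m] by [].
by rewrite -E => /imsetP [i _ ->]; apply/existsP; exists (s i).
Qed.


Lemma count_main : m * tonn_f n l m = n * ord_partitions k m.
Proof.
pose Dom := [set p : 'I_n * {ffun 'I_k -> 'I_m} | surjb p.2].
pose c (A : {set 'I_n}) := (#|A| == m) && tonn_simplex l A.
pose Tgt := [set p : {set 'I_n} * 'I_n | c p.1 && (p.2 \in p.1)].
pose Phi (p : 'I_n * {ffun 'I_k -> 'I_m}) := (Adef p.1 p.2, p.1).
have cD : #|Dom| = n * ord_partitions k m.
  rewrite /Dom (card_pair (fun (_ : 'I_n) g => surjb g)) sum_nat_const card_ord.
  by [].
have cT : #|Tgt| = m * tonn_f n l m.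
  rewrite /Tgt (card_pair (fun A (a : 'I_n) => c A && (a \in A))).
  transitivity (\sum_(A in [set A | c A]) m); last by rewrite sum_nat_const mulnC.
  rewrite [RHS]big_mkcond; apply: eq_bigr => A _; rewrite inE.
  case cA: (c A); last by apply/eqP; rewrite cards_eq0; apply/eqP/setP => a; rewrite !inE.
  move/andP: cA => [/eqP <- _]; by apply: eq_card => a; rewrite inE.
rewrite -cT -cD.
have Phi_inj : {in Dom &, injective Phi}.
  move=> [y f] [y' g]; rewrite !inE /= => sf sg [E1 E2].
  subst y'; congr pair; exact: Adef_inj sf sg E1.
rewrite -(card_in_imset Phi_inj); apply: eq_card => p.
apply/idP/imsetP => [|[[y f] fD ->]].
  case: p => A a; rewrite inE /= => /andP [/andP [/eqP cA sA] aA].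
  have [f sf E] := Adef_onto cA sA aA.
  by exists (a, f); rewrite ?inE // /Phi /= E.
move: fD; rewrite inE /= => sf; rewrite inE /= /c Adef_card // eqxx Adef_simplex //.
exact: Adef_in.
Qed.

End Main.

Theorem proposition2p5 (k : nat) (l : 'I_k -> nat) (n : nat) :
  2 <= k ->
  (forall i, 0 < l i) ->
  n = \sum_(i < k) l i ->
  generic l -> reduced l ->
  forall m, 1 <= m <= k ->
    tonn_f n l m = n * (ord_partitions k m %/ m) /\
    tonn_f n l m = n * (m`! %/ m) * stirling2 k m.
Proof.
move=> k2 lpos nE gen _ [|m'] // _.
have k0 : 0 < k by exact: leq_trans k2.
have n_gt0 : 0 < n.
  rewrite nE (bigD1 (Ordinal k0)) //=; by rewrite addn_gt0 lpos.
have C := count_main m' lpos nE gen n_gt0.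
rewrite surj_count factS in C *.
rewrite -mulnA !mulKn //.
have E : tonn_f n l m'.+1 = n * (m'`! * stirling2 k m'.+1).
  apply/eqP; rewrite -(eqn_pmul2l (ltn0Sn m')) C; apply/eqP; lia.
by rewrite E mulnA.
Qed.
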